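(* Let $p$ be an odd prime. Let $\mathcal{L}=(L_1,\dots,L_m)$ be a square-independent system of linear forms in $d$ variables over $\mathbb{F}_p$, whose linear span has dimension $d'$. Let $\Gamma_1:\mathbb{F}_p^n\to\mathbb{F}_p^{d_1}$ be a surjective linear map and let $\Gamma_2:\mathbb{F}_p^n\to\mathbb{F}_p^{d_2}$ be a quadratic map of rank at least $r$. Let $a_1,\dots,a_m\in\mathbb{F}_p^{d_1}$ and $b_1,\dots,b_m\in\mathbb{F}_p^{d_2}$. Let $Z$ be the subspace of $(\mathbb{F}_p^{d_1})^m$ consisting of all $(c_1,\dots,c_m)$ with $\sum_i\mu_ic_i=0$ whenever $\mu\in\mathbb{F}_p^m$ satisfies $\sum_i\mu_iL_i=0$. If $\mathbf{x}$ is chosen uniformly at random from $(\mathbb{F}_p^n)^d$, then the probability that $\Gamma_1(L_i(\mathbf{x}))=a_i$ and $\Gamma_2(L_i(\mathbf{x}))=b_i$ for every $i\le m$ is zero if $(a_1,\dots,a_m)\notin Z$, and if $(a_1,\dots,a_m)\in Z$ it differs from $p^{-d_1d'-d_2m}$ by at most $p^{d_1-d'd_1-r/2}$.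
   Context: A linear form in $d$ variables is $L(x_1,\dots,x_d)=\sum_{r=1}^d\gamma_rx_r$ with $\gamma_r\in\mathbb{F}_p$; for $\mathbf{x}\in(\mathbb{F}_p^n)^d$, $L(\mathbf{x})=\sum_r\gamma_rx_r\in\mathbb{F}_p^n$. A system $(L_1,\dots,L_m)$ with $L_i=\sum_r\gamma^{(i)}_rx_r$ is square-independent if the $d\times d$ matrices $(\gamma^{(i)}_r\gamma^{(i)}_s)_{r,s}$ are linearly independent over $\mathbb{F}_p$. A quadratic form on $\mathbb{F}_p^n$ is $q(x)=x^TMx$, $M$ symmetric over $\mathbb{F}_p$, with associated bilinear form $\beta(x,y)=(q(x+y)-q(x)-q(y))/2$. A quadratic map $\Gamma_2=(q_1,\dots,q_{d_2})$ has rank at least $r$ if $\sum_j\lambda_j\beta_j$ has rank at least $r$ for every nonzero $\lambda\in\mathbb{F}_p^{d_2}$, where $\beta_j$ is the bilinear form of $q_j$. *)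

(* Defs.v *)
From HB Require Import structures.
From mathcomp Require Import all_boot all_order all_algebra.
From mathcomp Require Import reals exp.
Set Implicit Arguments. Unset Strict Implicit. Unset Printing Implicit Defensive.
Import Order.TTheory GRing.Theory Num.Theory.
Local Open Scope ring_scope.

Section Defs.
Variable F : fieldType.

(* A system of m linear forms in d variables is a matrix gamma : 'M_(m,d);
   row i holds the coefficients of L_i.  For X : 'M_(d,n) whose rows are
   x_1,...,x_d in F^n, L_i(X) = sum_r gamma i r *: x_r = row i (gamma *m X). *)
Definition Lform_eval (m d n : nat) (gamma : 'M[F]_(m, d)) (X : 'M[F]_(d, n))
    (i : 'I_m) : 'rV[F]_n := row i (gamma *m X).

Definition sq_mx (m d : nat) (gamma : 'M[F]_(m, d)) (i : 'I_m) : 'M[F]_d :=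
  \matrix_(r, s) (gamma i r * gamma i s).

Definition square_independent (m d : nat) (gamma : 'M[F]_(m, d)) : Prop :=
  forall c : 'I_m -> F, \sum_i c i *: sq_mx gamma i = 0 -> forall i, c i = 0.

Definition qform (n : nat) (M : 'M[F]_n) (x : 'rV[F]_n) : F := (x *m M *m x^T) 0 0.

Definition bilin (n : nat) (M : 'M[F]_n) (x y : 'rV[F]_n) : F :=
  (qform M (x + y) - qform M x - qform M y) / 2%:R.

Definition bform_rank (n : nat) (beta : 'rV[F]_n -> 'rV[F]_n -> F) : nat :=
  \rank (\matrix_(i, j) beta (delta_mx 0 i) (delta_mx 0 j)).

(* quadratic map Gamma_2 = (q_1,...,q_d2), q_j given by symmetric Ms j,
   has rank at least r *)
Definition qmap_rank_ge (n d2 : nat) (Ms : 'I_d2 -> 'M[F]_n) (r : nat) : Prop :=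
  forall lam : 'rV[F]_d2, lam != 0 ->
    leq r (bform_rank (fun x y => \sum_j lam ord0 j * bilin (Ms j) x y)).

(* The subspace Z of (F^d1)^m (tuples stored as rows of A : 'M_(m,d1)) *)
Definition in_Z (m d d1 : nat) (gamma : 'M[F]_(m, d)) (A : 'M[F]_(m, d1)) : Prop :=
  forall mu : 'rV[F]_m, mu *m gamma = 0 -> mu *m A = 0.

End Defs.

(* Main.v *)
Require Import Defs.
From HB Require Import structures.
From mathcomp Require Import all_boot all_order all_algebra.
From mathcomp Require Import reals exp.
From mathcomp Require Import algC cyclotomic zify ring.
Unset Printing Implicit Defensive.
Import Order.TTheory GRing.Theory Num.Theory.
Local Open Scope ring_scope.

Section Gen.
Variable F : finFieldType.

Lemma card_submx k n a (U : 'M[F]_(a, n)) :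
  #|[set Y : 'M[F]_(k, n) | (Y <= U)%MS]| = (#|F| ^ (k * \rank U))%N.
Proof.
rewrite -card_mx.
have inj : injective (fun W : 'M[F]_(k, \rank U) => W *m row_base U).
  by move=> W1 W2; apply: (row_free_inj (row_base_free U)).
rewrite -(card_imset _ inj); apply: eq_card => Y.
rewrite inE; apply/idP/imsetP.
  rewrite -(eq_row_base U) => /submxP[W ->]; by exists W.
by case=> W _ ->; move: (submxMl W (row_base U)); rewrite eq_row_base.
Qed.

Lemma dual_sub m d k (C : 'M[F]_(m, d)) (A : 'M[F]_(m, k)) :
  (forall mu : 'rV_m, mu *m C = 0 -> mu *m A = 0) -> (A^T <= C^T)%MS.
Proof.
move=> H.
have kA : kermx C *m A = 0.
  apply/row_matrixP => i; rewrite row_mul row0; apply: H.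
  by rewrite -row_mul mulmx_ker row0.
have rk : \rank (row_mx C A) = \rank C.
  have e1 : (kermx (row_mx C A) == kermx C)%MS.
    apply/andP; split; rewrite sub_kermx.
      have := mulmx_ker (row_mx C A); rewrite mul_mx_row -row_mx0.
      by case/eq_row_mx => -> _.
    by rewrite mul_mx_row mulmx_ker kA row_mx0.
  have := mxrank_ker (row_mx C A); rewrite (eqmxP e1) mxrank_ker => e2.
  have h1 := rank_leq_row C; have h2 := rank_leq_row (row_mx C A).
  by apply/eqP; rewrite eqn_leq; apply/andP; split; lia.
have s1 : (C^T <= (row_mx C A)^T)%MS by rewrite tr_row_mx -addsmxE addsmxSl.
have := (mxrank_leqif_sup s1).2; rewrite !mxrank_tr rk eqxx => /esym s2.
apply: submx_trans s2; by rewrite tr_row_mx -addsmxE addsmxSr.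
Qed.
End Gen.
Section Fib.
Variable F : finFieldType.
Variables (a b c e : nat) (f : 'M[F]_(a, b) -> 'M[F]_(c, e)).
Hypothesis fB : forall x y, f (x - y) = f x - f y.
Variable K : pred 'M[F]_(a, b).
Hypothesis KB : forall x y, K x -> K y -> K (x - y).
Hypothesis KD : forall x y, K x -> K y -> K (x + y).

Lemma fiber_card (U : {pred 'M[F]_(c, e)}) :
  #|[set x | K x && (f x \in U)]| =
  (#|[set x | K x && (f x == 0%R)]| * #|[set w in f @: [set x | K x] | w \in U]|)%N.
Proof.
rewrite -sum1_card.
rewrite (partition_big f (fun w => w \in [set w in f @: [set x | K x] | w \in U])); last first.
  by move=> x; rewrite !inE => /andP[Kx ->]; rewrite andbT; apply/imsetP; exists x; rewrite ?inE.
rewrite mulnC -sum_nat_const; apply: eq_bigr => w; rewrite inE => /andP[/imsetP[x0 Kx0 ->] Ux0].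
rewrite inE in Kx0.
rewrite sum1_card.
have inj : injective (fun h => x0 + h) by apply: addrI.
rewrite -(card_imset [set x | K x && (f x == 0%R)] inj); apply: eq_card => x; rewrite -[in LHS]topredE /= inE.
apply/idP/imsetP.
  case/andP=> /andP[Kx _] /eqP fx; exists (x - x0); last by rewrite addrC subrK.
  by rewrite inE KB //= fB fx subrr eqxx.
case=> h; rewrite inE => /andP[Kh /eqP fh] ->.
have fD : f (x0 + h) = f x0 + f h.
  have f0 : f 0 = 0 by rewrite -(subrr (0:'M_(a,b))) fB subrr.
  have fN : forall y, f (- y) = - f y by move=> y; rewrite -sub0r fB f0 sub0r.
  by rewrite -{1}[h]opprK fB fN !opprK.
by rewrite KD // fD fh addr0 Ux0 eqxx.
Qed.
End Fib.
Section Char.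
Variable p : nat.
Hypothesis Hp : prime p.
Local Notation F := 'F_p.

Definition w0 : algC := projT1 (C_prim_root_exists (prime_gt0 Hp)).
Lemma w0_prim : p.-primitive_root w0.
Proof. exact: (projT2 (C_prim_root_exists (prime_gt0 Hp))). Qed.

Definition ech (x : F) : algC := w0 ^+ (nat_of_ord x).

Lemma val_Fp (x : F) : (nat_of_ord x < p)%N.
Proof. by have := ltn_ord x; move: (Fp_cast Hp) => e; rewrite [X in (_ < X)%N -> _]e. Qed.

Lemma Fp_natr (x : F) : (nat_of_ord x)%:R = x.
Proof. by apply: val_inj; rewrite /= val_Fp_nat // modn_small // val_Fp. Qed.

Lemma echD x y : ech (x + y) = ech x * ech y.
Proof.
rewrite /ech -exprD -{1}(Fp_natr x) -{1}(Fp_natr y) -natrD val_Fp_nat //.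
by rewrite expr_mod // prim_expr_order // w0_prim.
Qed.

Lemma ech0 : ech 0 = 1.
Proof. by rewrite /ech expr0. Qed.

Lemma ech_eq1 x : ech x = 1 -> x = 0.
Proof.
move/eqP; rewrite /ech -(prim_order_dvd w0_prim) => dv.
apply: val_inj => /=; have := val_Fp x.
by case/dvdnP: dv => k ->; case: k => // k; rewrite mulSn; lia.
Qed.

Lemma norm_ech x : `|ech x| = 1.
Proof.
have h : `|ech x| ^+ p = 1.
  by rewrite -normrX /ech -exprM mulnC exprM (prim_expr_order w0_prim) expr1n normr1.
by apply/eqP; rewrite -(pexpr_eq1 (prime_gt0 Hp)) ?normr_ge0 // h.
Qed.

Lemma ech_neq0 x : ech x != 0.
Proof. by rewrite -normr_eq0 norm_ech oner_eq0. Qed.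

Lemma conj_ech x : (ech x)^* = ech (- x).
Proof.
have h1 : (ech x)^* * ech x = 1 by rewrite mulrC -normCK norm_ech expr1n.
have h2 : ech (- x) * ech x = 1 by rewrite -echD addNr ech0.
by apply: (mulIf (ech_neq0 x)); rewrite h1 h2.
Qed.

Lemma orth a b (g : 'M[F]_(a, b) -> F) (K : pred 'M[F]_(a, b)) :
  (forall x y, g (x + y) = g x + g y) ->
  (forall x y, K x -> K y -> K (x + y)) ->
  (forall x y, K x -> K y -> K (x - y)) ->
  forall k0, K k0 -> g k0 != 0 -> \sum_(x | K x) ech (g x) = 0.
Proof.
move=> gD KD KB k0 Kk0 gk0.
set S := \sum_(x | K x) _.
have : S = S * ech (g k0).
  rewrite /S mulr_suml (reindex_inj (addIr k0)) /=.
  apply: eq_big => x.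
    apply/idP/idP => Kx; last by apply: KD.
    by rewrite -(addrK k0 x); apply: KB.
  by move=> _; rewrite gD echD.
move=> h; have : S * (ech (g k0) - 1) = 0 by rewrite mulrBr mulr1 -h subrr.
move/eqP; rewrite mulf_eq0 subr_eq0 => /orP[/eqP //|/eqP/ech_eq1 e].
by rewrite e eqxx in gk0.
Qed.
End Char.
Section Forms.
Variable F : fieldType.
Variable n : nat.

Lemma mx00D (A B : 'M[F]_1) : (A + B) 0 0 = A 0 0 + B 0 0.
Proof. by rewrite !mxE. Qed.
Lemma mx00B (A B : 'M[F]_1) : (A - B) 0 0 = A 0 0 - B 0 0.
Proof. by rewrite !mxE. Qed.
Lemma mx00Z c (A : 'M[F]_1) : (c *: A) 0 0 = c * A 0 0.
Proof. by rewrite !mxE. Qed.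

Definition bf (x : 'rV[F]_n) (M : 'M[F]_n) (y : 'rV[F]_n) : F := (x *m M *m y^T) 0 0.

Lemma bfC x M y : M^T = M -> bf x M y = bf y M x.
Proof.
move=> sM; rewrite /bf.
have -> : (x *m M *m y^T) 0 0 = ((x *m M *m y^T)^T) 0 0 by rewrite [in RHS]mxE.
by rewrite !trmx_mul trmxK sM mulmxA.
Qed.

Lemma bfDl x1 x2 M y : bf (x1 + x2) M y = bf x1 M y + bf x2 M y.
Proof. by rewrite /bf !mulmxDl mx00D. Qed.

Lemma bfBl x1 x2 M y : bf (x1 - x2) M y = bf x1 M y - bf x2 M y.
Proof. by rewrite /bf !mulmxBl mx00B. Qed.

Lemma bfDr x M y1 y2 : bf x M (y1 + y2) = bf x M y1 + bf x M y2.
Proof. by rewrite /bf linearD /= mulmxDr mx00D. Qed.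

Lemma bfZl c x M y : bf (c *: x) M y = c * bf x M y.
Proof. by rewrite /bf -!scalemxAl mx00Z. Qed.

Lemma bf_sumM (I : finType) (c : I -> F) (Ms : I -> 'M[F]_n) x y :
  bf x (\sum_i c i *: Ms i) y = \sum_i c i * bf x (Ms i) y.
Proof.
rewrite /bf mulmx_sumr mulmx_suml summxE; apply: eq_bigr => i _.
by rewrite -scalemxAr -scalemxAl mx00Z.
Qed.

Lemma qformE M x : qform M x = bf x M x.
Proof. by []. Qed.

Lemma qformD M x y : M^T = M ->
  qform M (x + y) = qform M x + 2%:R * bf x M y + qform M y.
Proof.
move=> sM; rewrite !qformE bfDl !bfDr (bfC y M x) //.
ring.
Qed.

Lemma bilinE (M : 'M[F]_n) x y : M^T = M -> (2%:R : F) != 0 -> bilin M x y = bf x M y.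
Proof.
move=> sM h2; rewrite /bilin qformD //.
by rewrite addrAC addrK addrC addKr mulrC mulKf.
Qed.

Lemma bf_delta (M : 'M[F]_n) i j : bf (delta_mx 0 i) M (delta_mx 0 j) = M i j.
Proof.
rewrite /bf trmx_delta -rowE -colE.
by rewrite !mxE.
Qed.
End Forms.
Arguments bf {F n}.
Lemma transfer (R : numDomainType) (a b c e : nat) :
  (((a%:R - b%:R) ^+ 2 * c%:R <= e%:R ^+ 2 :> R)) =
  (((a%:Z - b%:Z) ^+ 2 * c%:Z <= e%:Z ^+ 2))%R.
Proof.
rewrite -(ler_int R) rmorphM /= !rmorphXn /= rmorphB /=.
by [].
Qed.

Lemma real_final (R : realType) (p N K a b d1 r : nat) : (0 < p)%N -> (0 < K)%N ->
  (((N * p ^ b)%:R - K%:R) ^+ 2 * (p ^ r)%:R <= ((p ^ b * K * p ^ d1)%:R) ^+ 2 :> R) ->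
  `|N%:R / (K * p ^ a)%:R - (p%:R : R) `^ (- (a%:R + b%:R))|
       <= (p%:R : R) `^ (d1%:R - a%:R - r%:R / 2).
Proof.
move=> p0 K0 h.
set P : R := p%:R.
have P0 : 0 < P by rewrite ltr0n.
set s := P `^ (r%:R / 2).
have s0 : 0 < s by apply: powR_gt0.
have s2 : s ^+ 2 = (p ^ r)%:R.
  rewrite -powR_mulrn ?powR_ge0 // -powRrM.
  have -> : r%:R / 2 * 2 = (r%:R : R) by rewrite divfK // pnatr_eq0.
  by rewrite powR_mulrn ?ler0n // natrX.
have Pn : forall k : nat, P `^ k%:R = P ^+ k by move=> k; rewrite powR_mulrn // ltW.
rewrite powRN -natrD Pn.
rewrite powRD; last by rewrite (gt_eqF P0) implybT.
rewrite powRD; last by rewrite (gt_eqF P0) implybT.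
rewrite !powRN !Pn -/s.
set D : R := (N * p ^ b)%:R - K%:R.
have hD : `|D| * s <= (p ^ b * K * p ^ d1)%:R.
  have nn1 : `|D| * s \in Num.nneg by rewrite nnegrE mulr_ge0 ?normr_ge0 ?ltW.
  have nn2 : ((p ^ b * K * p ^ d1)%:R : R) \in Num.nneg by rewrite nnegrE ler0n.
  rewrite -(ler_pXn2r (isT : (0 < 2)%N) nn1 nn2).
  by rewrite exprMn real_normK ?rpredB ?realn // s2.
have Kp : 0 < (K%:R : R) by rewrite ltr0n.
have E1 : N%:R / (K * p ^ a)%:R - (P ^+ (a + b))^-1 = D / (K%:R * P ^+ a * P ^+ b).
  rewrite /D !natrM !natrX -/P exprD; field.
  by rewrite !expf_neq0 ?(gt_eqF Kp) ?(gt_eqF P0).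
rewrite E1 normf_div [X in _ / X]ger0_norm; last by rewrite !mulr_ge0 ?exprn_ge0 ?ltW.
have pos : 0 < K%:R * P ^+ a * P ^+ b * s by rewrite !mulr_gt0 ?exprn_gt0.
rewrite -(ler_pM2r pos).
have -> : `|D| / (K%:R * P ^+ a * P ^+ b) * (K%:R * P ^+ a * P ^+ b * s) = `|D| * s.
  field; by rewrite !expf_neq0 ?(gt_eqF Kp) ?(gt_eqF P0) ?(gt_eqF s0).
have -> : P ^+ d1 / P ^+ a / s * (K%:R * P ^+ a * P ^+ b * s) = (p ^ b * K * p ^ d1)%:R.
  rewrite !natrM !natrX -/P; field.
  by rewrite !expf_neq0 ?(gt_eqF Kp) ?(gt_eqF P0) ?(gt_eqF s0).
exact: hD.
Qed.

Section Main.
Variable p : nat.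
Hypothesis Hp : prime p.
Hypothesis Hodd : odd p.
Local Notation F := 'F_p.
Variables (m d n d1 d2 r : nat).
Variable gamma : 'M[F]_(m, d).
Hypothesis Hsq : square_independent gamma.
Variable G1 : 'M[F]_(n, d1).
Hypothesis HG1 : forall y : 'rV[F]_d1, exists x : 'rV[F]_n, x *m G1 = y.
Variable Ms : 'I_d2 -> 'M[F]_n.
Hypothesis Hsym : forall j, (Ms j)^T = Ms j.
Hypothesis Hrank : qmap_rank_ge Ms r.

Lemma two_neq0 : (2%:R : F) != 0.
Proof.
rewrite -(dvdn_pcharf (pchar_Fp Hp)); apply/negP => /dvdn_leq.
move=> /(_ isT); have := prime_gt1 Hp; case: p Hodd => [|[|[|q]]] //=.
Qed.

Lemma rankG1 : \rank G1 = d1.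
Proof.
apply/eqP; rewrite -/(row_full G1) -sub1mx; apply/row_subP => i.
by have [x <-] := HG1 (row i 1%:M); apply: submxMl.
Qed.

Definition Nm (lam : 'M[F]_(m, d2)) (i : 'I_m) : 'M[F]_n := \sum_j lam i j *: Ms j.
Definition LX (X : 'M[F]_(d, n)) i := row i (gamma *m X).
Definition Qf lam X := \sum_i bf (LX X i) (Nm lam i) (LX X i).
Definition Bil lam X Y := \sum_i bf (LX X i) (Nm lam i) (LX Y i).
Definition inK (X : 'M[F]_(d, n)) := gamma *m X *m G1 == 0.

Lemma NmT lam i : (Nm lam i)^T = Nm lam i.
Proof. by rewrite /Nm linear_sum; apply: eq_bigr => j _; rewrite linearZ /= Hsym. Qed.

Lemma LXD X Y i : LX (X + Y) i = LX X i + LX Y i.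
Proof. by rewrite /LX mulmxDr linearD. Qed.
Lemma LXB X Y i : LX (X - Y) i = LX X i - LX Y i.
Proof. by rewrite /LX mulmxBr linearB. Qed.

Lemma QfD lam X Y : Qf lam (X + Y) = Qf lam X + 2%:R * Bil lam X Y + Qf lam Y.
Proof.
rewrite /Qf /Bil mulr_sumr -!big_split /=; apply: eq_bigr => i _.
by rewrite LXD -!qformE qformD ?NmT.
Qed.

Lemma BilDl lam X Y Z : Bil lam (X + Y) Z = Bil lam X Z + Bil lam Y Z.
Proof. by rewrite /Bil -big_split; apply: eq_bigr => i _; rewrite LXD bfDl. Qed.
Lemma BilBl lam X Y Z : Bil lam (X - Y) Z = Bil lam X Z - Bil lam Y Z.
Proof. by rewrite /Bil -sumrB; apply: eq_bigr => i _; rewrite LXB bfBl. Qed.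

Lemma Qf_orig (lam : 'M[F]_(m, d2)) X :
  \sum_i \sum_j lam i j * qform (Ms j) (LX X i) = Qf lam X.
Proof. by rewrite /Qf; apply: eq_bigr => i _; rewrite /Nm bf_sumM. Qed.

Lemma inKD X Y : inK X -> inK Y -> inK (X + Y).
Proof. by rewrite /inK mulmxDr mulmxDl => /eqP-> /eqP->; rewrite addr0. Qed.
Lemma inKB X Y : inK X -> inK Y -> inK (X - Y).
Proof. by rewrite /inK mulmxBr mulmxBl => /eqP-> /eqP->; rewrite subr0. Qed.

Lemma LX_delta s0 (y : 'rV[F]_n) i : LX (delta_mx s0 0 *m y) i = gamma i s0 *: y.
Proof.
rewrite /LX mulmxA -colE row_mul.
rewrite [row i (col s0 gamma)]mx11_scalar mul_scalar_mx !mxE.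
by [].
Qed.

Lemma inK_delta s0 (y : 'rV[F]_n) : y *m G1 = 0 -> inK (delta_mx s0 0 *m y).
Proof. by move=> h; rewrite /inK !mulmxA -(mulmxA _ y) h mulmx0. Qed.


Definition mu (lam : 'M[F]_(m, d2)) r0 s0 : 'rV[F]_d2 :=
  \row_j \sum_i lam i j * (gamma i r0 * gamma i s0).

Lemma exists_rs (lam : 'M[F]_(m, d2)) : lam != 0 ->
  exists r0, exists s0, mu lam r0 s0 != 0.
Proof.
move=> nz; case: (boolP [exists r0, exists s0, mu lam r0 s0 != 0]).
  by case/existsP=> r0 /existsP[s0 h]; exists r0, s0.
rewrite negb_exists => /forallP H; exfalso; move/eqP: nz; apply.
apply/matrixP => i j; rewrite [RHS]mxE.
have Hj : \sum_i (lam i j) *: sq_mx gamma i = 0.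
  apply/matrixP => a b.
  have := H a; rewrite negb_exists => /forallP /(_ b); rewrite negbK => /eqP/matrixP/(_ 0 j).
  rewrite !mxE => E0.
  rewrite summxE; apply: etrans E0; apply: eq_bigr => k _; rewrite !mxE.
  by [].
exact: (Hsq (fun k => lam k j) Hj i).
Qed.

Definition Msum (v : 'rV[F]_d2) : 'M[F]_n := \sum_j v 0 j *: Ms j.

Lemma rank_mu (v : 'rV[F]_d2) : v != 0 -> (r <= \rank (Msum v))%N.
Proof.
move=> /Hrank; rewrite /bform_rank.
set M := \matrix_(i, j) _.
suff -> : M = Msum v by [].
apply/matrixP => a b; rewrite mxE summxE; apply: eq_bigr => j _.
by rewrite bilinE ?Hsym ?two_neq0 // bf_delta mxE.
Qed.


Definition phi lam s0 (h : 'M[F]_(d, n)) : 'rV[F]_n :=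
  \sum_i gamma i s0 *: (LX h i *m Nm lam i).
Definition Pm lam r0 s0 : 'M[F]_n := \sum_i (gamma i r0 * gamma i s0) *: Nm lam i.
Definition rad lam := [set h | inK h && [forall k, inK k ==> (Bil lam k h == 0)]].

Lemma Pm_Msum lam r0 s0 : Pm lam r0 s0 = Msum (mu lam r0 s0).
Proof.
rewrite /Pm /Msum /Nm.
under eq_bigr do rewrite scaler_sumr.
rewrite exchange_big /=; apply: eq_bigr => j _.
rewrite mxE scaler_suml; apply: eq_bigr => i _.
by rewrite scalerA mulrC.
Qed.

Lemma phiB lam s0 x y : phi lam s0 (x - y) = phi lam s0 x - phi lam s0 y.
Proof.
rewrite /phi -sumrB; apply: eq_bigr => i _.
by rewrite LXB mulmxBl scalerBr.
Qed.

Lemma phi_delta lam r0 s0 (y : 'rV[F]_n) : phi lam s0 (delta_mx r0 0 *m y) = y *m Pm lam r0 s0.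
Proof.
rewrite /phi /Pm mulmx_sumr; apply: eq_bigr => i _.
by rewrite LX_delta -scalemxAl scalerA -scalemxAr mulrC.
Qed.

Lemma Bil_delta lam s0 (y : 'rV[F]_n) h : Bil lam (delta_mx s0 0 *m y) h = (y *m (phi lam s0 h)^T) 0 0.
Proof.
rewrite /Bil /phi linear_sum mulmx_sumr summxE; apply: eq_bigr => i _.
rewrite LX_delta bfZl linearZ /= -scalemxAr mx00Z trmx_mul NmT /bf mulmxA.
by [].
Qed.

Lemma rad_sub lam s0 h : h \in rad lam -> (phi lam s0 h <= G1^T)%MS.
Proof.
rewrite inE => /andP[_ /forallP H].
rewrite -[phi _ _ _]trmxK; apply: dual_sub => y yG.
have := H (delta_mx s0 0 *m y); rewrite inK_delta // Bil_delta => /eqP h0.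
rewrite [LHS]mx11_scalar h0; apply/matrixP => a b; by rewrite !mxE mul0rn.
Qed.


Lemma cardF : #|F| = p.
Proof. exact: card_Fp. Qed.

Lemma rad_bound lam : lam != 0 ->
  (#|rad lam| * p ^ r <= #|[set X | inK X]| * p ^ (2 * d1))%N.
Proof.
move=> nz; have [r0 [s0 hmu]] := exists_rs lam nz.
pose f := phi lam s0.
have fB : forall x y, f (x - y) = f x - f y by move=> x y; apply: phiB.
have c1 := fiber_card F d n 1 n f fB inK inKB inKD [pred u | (u <= G1^T)%MS].
have c2 := fiber_card F d n 1 n f fB inK inKB inKD predT.
set K0 := #|[set x | inK x & f x == 0]| in c1 c2.
have s1 : (#|rad lam| <= #|[set x | inK x & f x \in [pred u | (u <= G1^T)%MS]]|)%N.
  apply: subset_leq_card; apply/subsetP => h hr; rewrite inE.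
  by move: (hr); rewrite inE => /andP[-> _]; rewrite inE (rad_sub _ _ _ hr).
have s2 : (#|[set w in f @: [set x | inK x] | w \in [pred u | (u <= G1^T)%MS]]| <= p ^ d1)%N.
  apply: (@leq_trans (#|F| ^ (1 * \rank G1^T))); last by rewrite mul1n mxrank_tr rankG1 cardF.
  rewrite -(card_submx F 1 n d1 G1^T).
  by apply: subset_leq_card; apply/subsetP => w; rewrite !inE => /andP[_ ->].
have s3 : (p ^ \rank (kermx G1 *m Pm lam r0 s0) <=
          #|[set w in f @: [set x | inK x] | w \in predT]|)%N.
  apply: (@leq_trans (#|F| ^ (1 * \rank (kermx G1 *m Pm lam r0 s0)))); first by rewrite mul1n cardF.
  rewrite -(card_submx F 1 n n).
  apply: subset_leq_card; apply/subsetP => v; rewrite !inE andbT => /submxP[w ->].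
  apply/imsetP; exists (delta_mx r0 0 *m (w *m kermx G1)).
    by rewrite inE inK_delta // -mulmxA mulmx_ker mulmx0.
  by rewrite /f phi_delta mulmxA.
have rk : (r <= \rank (kermx G1 *m Pm lam r0 s0) + d1)%N.
  have h1 := rank_mu _ hmu; rewrite -Pm_Msum in h1.
  have h2 := mxrank_mul_min (kermx G1) (Pm lam r0 s0).
  rewrite mxrank_ker rankG1 in h2.
  have h3 := rank_leq_col (Pm lam r0 s0).
  have h4 := rank_leq_row G1; rewrite rankG1 in h4.
  lia.
have eK : #|[set X | inK X]| = #|[set x | inK x & f x \in predT]|.
  by apply: eq_card => x; rewrite !inE andbT.
have p0 : (0 < p)%N := prime_gt0 Hp.
rewrite eK c2.
set I2 := #|[set w in _ | w \in predT]| in s3 *.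
set I1 := #|[set w in _ | _]| in c1 s2.
have e1 : (#|rad lam| <= K0 * p ^ d1)%N.
  by apply: (leq_trans s1); rewrite c1 leq_mul2l s2 orbT.
have e2 : (p ^ r <= I2 * p ^ d1)%N.
  apply: (leq_trans (leq_pexp2l p0 rk)); rewrite expnD leq_mul2r s3 orbT.
  by [].
have -> : (2 * d1 = d1 + d1)%N by lia.
rewrite expnD.
apply: (leq_trans (leq_mul e1 e2)).
rewrite -!mulnA leq_mul2l; apply/orP; right.
by rewrite mulnA [(p ^ d1 * I2)%N]mulnC -mulnA.
Qed.


Local Notation e := (ech p Hp).
Definition Kset := [set X : 'M[F]_(d, n) | inK X].

Lemma inner_sum lam h : inK h ->
  \sum_(k | inK k) e (2%:R * Bil lam k h) = (h \in rad lam)%:R * #|Kset|%:R.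
Proof.
move=> Kh; case: (boolP (h \in rad lam)) => hr.
  rewrite mul1r -sum1_card natr_sum; apply: eq_big => k; first by rewrite inE.
  move: hr; rewrite inE => /andP[_ /forallP /(_ k)] /implyP H Kk.
  by rewrite (eqP (H Kk)) mulr0 ech0.
rewrite mul0r; move: hr; rewrite inE Kh /= negb_forall => /existsP[k0].
rewrite negb_imply => /andP[Kk0 nb].
apply: (orth p Hp d n (fun k => 2%:R * Bil lam k h) inK _ inKD inKB k0 Kk0).
  by move=> x y; rewrite BilDl mulrDr.
by rewrite mulf_neq0 // two_neq0.
Qed.


Lemma sum_rad lam : \sum_(h | inK h) ((h \in rad lam)%:R : algC) = #|rad lam|%:R.
Proof.
rewrite -sum1_card natr_sum (bigID (fun h => h \in rad lam)) /=.
rewrite [X in _ + X]big1 ?addr0; last by move=> h /andP[_ /negbTE ->].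
apply: eq_big => h; last by move=> /andP[_ ->].
by apply/andP/idP => [[]//|hr]; split=> //; move: hr; rewrite inE => /andP[].
Qed.

Lemma E_sq lam X0 c :
  `|\sum_(k | inK k) e (Qf lam (X0 + k) + c)| ^+ 2 <= (#|rad lam| * #|Kset|)%:R.
Proof.
set g := fun k => Qf lam (X0 + k) + c.
set E := \sum_(k | inK k) _.
have step : forall k', inK k' -> E * e (- g k') =
    \sum_(h | inK h) (e (2%:R * Bil lam X0 h + Qf lam h) * e (2%:R * Bil lam k' h)).
  move=> k' Kk'; rewrite /E mulr_suml (reindex_inj (addrI k')) /=.
  apply: eq_big => h.
    apply/idP/idP => H; last exact: inKD.
    have -> : h = (k' + h) - k' by rewrite addrC addKr.
    exact: inKB.
  move=> _; rewrite -!echD; congr e.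
  rewrite /g addrA QfD BilDl; ring.
rewrite -[X in X <= _]ger0_norm ?exprn_ge0 ?normr_ge0 // normCK.
rewrite (_ : E^* = \sum_(k | inK k) e (- g k)); last first.
  rewrite /E rmorph_sum; apply: eq_bigr => k _. exact: (conj_ech p Hp _).
rewrite mulr_sumr (eq_bigr _ step) exchange_big /=.
under eq_bigr do rewrite -mulr_sumr.
apply: (le_trans (ler_norm_sum _ _ _)).
rewrite natrM -sum_rad mulr_suml ler_sum // => h Kh.
by rewrite normrM norm_ech mul1r inner_sum // ger0_norm // mulr_ge0 ?ler0n.
Qed.


Lemma E_bound lam X0 c : lam != 0 ->
  `|\sum_(k | inK k) e (Qf lam (X0 + k) + c)| * sqrtC (p ^ r)%:R <= (#|Kset| * p ^ d1)%:R.
Proof.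
move=> nz.
rewrite -(ler_pXn2r (n:=2)) // ?nnegrE ?mulr_ge0 ?normr_ge0 ?sqrtC_ge0 ?ler0n //.
rewrite exprMn sqrtCK.
apply: le_trans (ler_wpM2r (ler0n _ _) (E_sq lam X0 c)) _.
rewrite -natrM -natrX ler_nat.
have := rad_bound lam nz; rewrite -/Kset.
have -> : (p ^ (2 * d1) = (p ^ d1) ^ 2)%N by rewrite -expnM mulnC.
set a := #|rad lam|; set b := #|Kset|; set q := (p ^ r)%N; set t := (p ^ d1)%N.
move=> h; have : (b * (a * q) <= b * (b * t ^ 2))%N by rewrite leq_mul2l h orbT.
by rewrite expnMn; nia.
Qed.


Lemma G1_full : row_full G1.
Proof. by rewrite /row_full rankG1. Qed.

Lemma solve_X (W : 'M[F]_(d, d1)) : exists X : 'M[F]_(d, n), X *m G1 = W.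
Proof. by exists (W *m pinvmx G1); rewrite mulmxKpV // submx_full // G1_full. Qed.

Lemma im_gamma (Y : 'M[F]_(m, d1)) : (Y^T <= gamma^T)%MS ->
  exists X : 'M[F]_(d, n), gamma *m X *m G1 = Y.
Proof.
case/submxP=> W hW; have [X hX] := solve_X W^T.
exists X; rewrite -mulmxA hX -[Y]trmxK hW trmx_mul trmxK.
by [].
Qed.

Definition fG (X : 'M[F]_(d, n)) := gamma *m X *m G1.

Lemma fGB x y : fG (x - y) = fG x - fG y.
Proof. by rewrite /fG mulmxBr mulmxBl. Qed.

Lemma card_K : (#|Kset| * p ^ (d1 * \rank gamma) = p ^ (d * n))%N.
Proof.
have c := fiber_card F d n m d1 fG fGB predT (fun _ _ _ _ => isT) (fun _ _ _ _ => isT) predT.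
have e1 : #|[set x : 'M[F]_(d, n) | predT x & fG x \in predT]| = (p ^ (d * n))%N.
  transitivity (#|F| ^ (d * n))%N; last by rewrite cardF.
  rewrite -card_mx; apply: eq_card => x; by rewrite !inE.
have e2 : #|[set x : 'M[F]_(d, n) | predT x & fG x == 0]| = #|Kset|.
  by apply: eq_card => x; rewrite !inE.
have e3 : #|[set w in fG @: [set x | predT x] | w \in predT]| = (p ^ (d1 * \rank gamma))%N.
  transitivity (#|F| ^ (d1 * \rank gamma^T))%N; last by rewrite cardF mxrank_tr.
  rewrite -(card_submx F d1 m d gamma^T).
  have inj : injective (fun Y : 'M[F]_(m, d1) => Y^T) by exact: trmx_inj.
  rewrite -(card_imset _ inj); apply: eq_card => Y'; rewrite !inE.
  apply/imsetP/idP.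
    case=> Y; rewrite !inE => /andP[/imsetP[X _ ->] _] ->.
    by rewrite /fG !trmx_mul mulmxA submxMl.
  move=> hY; have [X hX] : exists X, gamma *m X *m G1 = Y'^T by apply: im_gamma; rewrite trmxK.
  exists Y'^T; last by rewrite trmxK.
  by rewrite !inE andbT; apply/imsetP; exists X; rewrite ?inE // /fG hX.
by rewrite -e1 c e2 e3.
Qed.

Lemma card_S (A : 'M[F]_(m, d1)) X0 : gamma *m X0 *m G1 = A ->
  #|[set X | gamma *m X *m G1 == A]| = #|Kset|.
Proof.
move=> h0; have inj : injective (fun k => X0 + k) by apply: addrI.
rewrite -(card_imset Kset inj); apply: eq_card => X; rewrite inE.
apply/eqP/imsetP.
  move=> hX; exists (X - X0); last by rewrite addrC subrK.
  by rewrite inE /inK mulmxBr mulmxBl hX h0 subrr.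
case=> k; rewrite inE /inK => /eqP hk ->.
by rewrite mulmxDr mulmxDl hk addr0.
Qed.


Lemma char_id (v : 'M[F]_(m, d2)) :
  \sum_(lam : 'M[F]_(m, d2)) e (\sum_i \sum_j lam i j * v i j) =
  (v == 0)%:R * (p ^ (m * d2))%:R.
Proof.
case: (eqVneq v 0) => [->|nz].
  rewrite mul1r.
  transitivity (\sum_(lam : 'M[F]_(m, d2)) (1 : algC)).
    apply: eq_bigr => lam _; rewrite big1 ?ech0 // => i _; rewrite big1 // => j _.
    by rewrite mxE mulr0.
  by rewrite sumr_const card_mx cardF.
rewrite mul0r.
have [i0 [j0 hv]] : exists i0 j0, v i0 j0 != 0.
  case: (boolP [exists i0, exists j0, v i0 j0 != 0]).
    by case/existsP=> i0 /existsP[j0 h]; exists i0, j0.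
  rewrite negb_exists => /forallP H; case/eqP: nz; apply/matrixP => i j.
  by have := H i; rewrite negb_exists => /forallP /(_ j); rewrite negbK mxE => /eqP.
apply: (orth p Hp m d2 (fun lam => \sum_i \sum_j lam i j * v i j) predT _ _ _ (delta_mx i0 j0)) => //.
  move=> x y; rewrite -big_split; apply: eq_bigr => i _.
  by rewrite -big_split; apply: eq_bigr => j _; rewrite mxE mulrDl.
rewrite (bigD1 i0) //= (bigD1 j0) //= big1 ?addr0; last first.
  by move=> j hj; rewrite mxE eqxx (negbTE hj) mul0r.
rewrite big1 ?addr0; last first.
  move=> i hi; rewrite big1 // => j _; by rewrite mxE (negbTE hi) mul0r.
by rewrite mxE !eqxx mul1r.
Qed.


Definition Phi (B : 'M[F]_(m, d2)) (lam : 'M[F]_(m, d2)) X :=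
  \sum_i \sum_j lam i j * (qform (Ms j) (LX X i) - B i j).
Definition vX (B : 'M[F]_(m, d2)) X : 'M[F]_(m, d2) :=
  \matrix_(i, j) (qform (Ms j) (LX X i) - B i j).
Definition Nset (A : 'M[F]_(m, d1)) (B : 'M[F]_(m, d2)) :=
  [set X : 'M[F]_(d, n) | [forall i : 'I_m,
        (Lform_eval gamma X i *m G1 == row i A) &&
        [forall j : 'I_d2, qform (Ms j) (Lform_eval gamma X i) == B i j]]].

Lemma Nset_E A B X : (X \in Nset A B) = (fG X == A) && (vX B X == 0).
Proof.
rewrite inE; apply/forallP/andP => [H|[/eqP hA /eqP hv] i].
  split.
    apply/eqP/row_matrixP => i; have /andP[/eqP h _] := H i.
    by rewrite /fG row_mul -h.
  apply/eqP/matrixP => i j; have /andP[_ /forallP /(_ j) /eqP h] := H i.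
  by rewrite !mxE /LX -h subrr.
apply/andP; split.
  by rewrite /Lform_eval -row_mul -hA.
apply/forallP => j; move/matrixP: hv => /(_ i j); rewrite !mxE.
by move/eqP; rewrite subr_eq0.
Qed.

Lemma Phi_eq B lam X : Phi B lam X = Qf lam X + - \sum_i \sum_j lam i j * B i j.
Proof.
rewrite -Qf_orig /Phi -sumrN -big_split; apply: eq_bigr => i _.
by rewrite -sumrN -big_split; apply: eq_bigr => j _; rewrite mulrBr.
Qed.

Lemma fourier A B : (#|Nset A B|%:R * (p ^ (m * d2))%:R : algC) =
  \sum_(lam : 'M[F]_(m, d2)) \sum_(X | fG X == A) e (Phi B lam X).
Proof.
have -> : (#|Nset A B|%:R : algC) = \sum_(X | fG X == A) ((vX B X == 0)%:R : algC).
  rewrite -sum1_card natr_sum (bigID (fun X => vX B X == 0) (fun X => fG X == A)) /=.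
  rewrite [X in _ + X]big1 ?addr0; last by move=> X /andP[_ /negbTE ->].
  apply: eq_big => X; first by rewrite Nset_E.
  by move=> XN; move: (XN); rewrite Nset_E => /andP[_ ->].
rewrite mulr_suml exchange_big /=; apply: eq_bigr => X _.
rewrite -char_id; apply: eq_bigr => lam _; congr e.
by rewrite /Phi; apply: eq_bigr => i _; apply: eq_bigr => j _; rewrite mxE.
Qed.


Lemma main_alg A B X0 : fG X0 = A ->
  `|((#|Nset A B| * p ^ (m * d2))%:R - #|Kset|%:R : algC)| * sqrtC (p ^ r)%:R <=
  (p ^ (m * d2) * #|Kset| * p ^ d1)%:R.
Proof.
move=> h0.
rewrite natrM fourier (bigD1 0) //=.
have -> : \sum_(X | fG X == A) e (Phi B 0 X) = #|Kset|%:R.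
  rewrite -(card_S A X0 h0) -sum1_card natr_sum; apply: eq_big => X; first by rewrite inE.
  move=> _; rewrite /Phi big1 ?ech0 // => i _; rewrite big1 // => j _.
  by rewrite mxE mul0r.
rewrite [X in `|X|]addrC addKr.
have s0 : 0 <= sqrtC ((p ^ r)%:R : algC) by rewrite sqrtC_ge0 ler0n.
apply: le_trans (ler_wpM2r s0 (ler_norm_sum _ _ _)) _.
rewrite mulr_suml.
apply: (@le_trans _ _ (\sum_(lam : 'M[F]_(m, d2)) ((#|Kset| * p ^ d1)%:R : algC))).
  rewrite [X in _ <= X](bigID (fun lam => lam != 0)) /= -[X in X <= _]addr0.
  apply: lerD; last by apply: sumr_ge0 => i _; apply: ler0n.
  apply: ler_sum => lam nz.
  rewrite (reindex_inj (addrI X0)) /=.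
  set c := - \sum_i \sum_j lam i j * B i j.
  rewrite (eq_big (fun k => inK k) (fun k => e (Qf lam (X0 + k) + c))).
  - exact: E_bound.
  - move=> k; rewrite /fG /inK mulmxDr mulmxDl -/(fG X0) h0.
    by rewrite -{2}[A]addr0 (inj_eq (addrI A)).
  - by move=> k _; rewrite Phi_eq.
rewrite sumr_const card_mx cardF.
rewrite -mulrnA.
by rewrite ler_nat mulnC mulnA.
Qed.


Lemma exists_X0 A : in_Z gamma A -> exists X0, fG X0 = A.
Proof. by move=> hZ; apply: im_gamma; apply: dual_sub. Qed.

Lemma Nset_empty A B : ~ in_Z gamma A -> #|Nset A B| = 0%N.
Proof.
move=> nZ; apply/eqP; rewrite cards_eq0; apply/eqP/setP => X.
rewrite Nset_E inE; apply/negbTE/negP => /andP[/eqP hA _]; apply: nZ => mu hmu.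
by rewrite -hA /fG !mulmxA hmu !mul0mx.
Qed.

Lemma key_alg A B : in_Z gamma A ->
  ((((#|Nset A B| * p ^ (m * d2))%:R - #|Kset|%:R) ^+ 2 * (p ^ r)%:R
    <= ((p ^ (m * d2) * #|Kset| * p ^ d1)%:R) ^+ 2 :> algC)).
Proof.
move=> hZ; have [X0 h0] := exists_X0 A hZ.
have h := main_alg A B X0 h0.
rewrite -(sqrtCK ((p ^ r)%:R)) -real_normK ?rpredB ?realn // -exprMn.
by apply: lerXn2r => //; rewrite nnegrE ?mulr_ge0 ?normr_ge0 ?sqrtC_ge0 ?ler0n.
Qed.


Lemma final_main (R : realType) (d' : nat) (Hd' : \rank gamma = d') A B :
  (~ in_Z gamma A -> (#|Nset A B|%:R / #|{: 'M[F]_(d, n)}|%:R : R) = 0) /\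
  (in_Z gamma A ->
     `|(#|Nset A B|%:R / #|{: 'M[F]_(d, n)}|%:R : R) - (p%:R : R) `^ (- ((d1 * d')%:R + (d2 * m)%:R))|
       <= (p%:R : R) `^ (d1%:R - (d' * d1)%:R - r%:R / 2)).
Proof.
split.
  by move=> nZ; rewrite (Nset_empty A B nZ) mul0r.
move=> hZ.
have cK := card_K; rewrite Hd' in cK.
have -> : #|{: 'M[F]_(d, n)}| = (#|Kset| * p ^ (d1 * d'))%N by rewrite card_mx cardF cK.
have K0 : (0 < #|Kset|)%N.
  by rewrite card_gt0; apply/set0Pn; exists 0; rewrite inE /inK mulmx0 mul0mx.
have h := key_alg A B hZ; rewrite (transfer algC) -(transfer R) in h.
rewrite [(d' * d1)%N]mulnC [(d2 * m)%N]mulnC.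
exact: (real_final R p #|Nset A B| #|Kset| (d1 * d') (m * d2) d1 r (prime_gt0 Hp) K0 h).
Qed.

End Main.

Theorem lemma3p8 (R : realType) (p : nat) (Hp : prime p) (Hodd : odd p)
  (m d d' n d1 d2 r : nat)
  (gamma : 'M['F_p]_(m, d)) (Hsq : square_independent gamma)
  (Hd' : \rank gamma = d')
  (G1 : 'M['F_p]_(n, d1)) (HG1 : forall y : 'rV['F_p]_d1, exists x : 'rV['F_p]_n, x *m G1 = y)
  (Ms : 'I_d2 -> 'M['F_p]_n) (Hsym : forall j, (Ms j)^T = Ms j)
  (Hrank : qmap_rank_ge Ms r)
  (A : 'M['F_p]_(m, d1)) (B : 'M['F_p]_(m, d2)) :
  let prob : R :=
    #|[set X : 'M['F_p]_(d, n) | [forall i : 'I_m,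
        (Lform_eval gamma X i *m G1 == row i A) &&
        [forall j : 'I_d2, qform (Ms j) (Lform_eval gamma X i) == B i j]]]|%:R
    / #|{: 'M['F_p]_(d, n)}|%:R in
  (~ in_Z gamma A -> prob = 0) /\
  (in_Z gamma A ->
     `|prob - (p%:R : R) `^ (- ((d1 * d')%:R + (d2 * m)%:R))|
       <= (p%:R : R) `^ (d1%:R - (d' * d1)%:R - r%:R / 2)).
Proof.
move=> prob.
exact: (final_main p Hp Hodd m d n d1 d2 r gamma Hsq G1 HG1 Ms Hsym Hrank R d' Hd' A B).
Qed.
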